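(* There exist sets of identities $\Sigma_1,\Sigma_2$ of type $(2)$ such that $D(\Sigma_1)\subsetneqq SR(\Sigma_1)$ and $SR(\Sigma_2)\subsetneqq \Sigma R(\Sigma_2)$.
   Context: Type $\tau=(2)$: one binary symbol $f$; $W_\tau(X)$ terms over $X=\{x_1,x_2,\dots\}$, $W_\tau(X_n)$ terms in $x_1,\dots,x_n$. For a set $\Gamma$ of identities, $\Gamma\models t\approx s$ means every groupoid satisfying $\Gamma$ satisfies $t\approx s$. Positions $Pos(t)\subseteq\{1,2\}^*$ (root $\varepsilon$, children $p1,p2$), $sub_t(p)$ subterm at $p$, $\preceq$ prefix order; $t(p;r)$ replaces the subterm at $p$ by $r$; $t(x\leftarrow r)$ replaces every occurrence of the variable $x$ by $r$. $D(\Sigma)$ is the smallest set of identities containing $\Sigma$ and closed under reflexivity, symmetry, transitivity, variable substitution ($t\approx s\Rightarrow t(x\leftarrow r)\approx s(x\leftarrow r)$) and positional replacement ($t\approx s$, $sub_r(p)=t$ $\Rightarrow r(p;s)\approx r$), i.e. the equational theory generated by $\Sigma$. A position $p\in Pos(t)$, $t\in W_\tau(X_n)$, is $\Gamma$-essential if some $\mathcal A\models\Gamma$ has the term operation of $t(p;x_{n+1})$ depending on $x_{n+1}$; $PEss(t,\Gamma)$ is the set of these. $SEss(t,\Gamma)=\{r\mid\Gamma\models r\approx sub_t(p),\ p\in PEss(t,\Gamma)\}$. $P_r^t$ is the set of $\preceq$-minimal elements of $\{p\in Pos(t)\mid\Gamma\models sub_t(p)\approx r\}$. $\Sigma$-composition: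 $t^\Gamma(r\leftarrow u)=t$ if $P_r^t=\emptyset$, else $t$ with the subterms at all positions of $P_r^t$ replaced by $u$. Essential composition: $EP_r^t=\{p\in P_r^t\mid\text{every }q\in Pos(t)\text{ with }p\preceq q\text{ lies in }PEss(t,\Gamma)\}$; $t(r*u)=t$ if $EP_r^t=\emptyset$, else $t$ with the subterms at all positions of $EP_r^t$ replaced by $u$. $\Gamma$ is $\Sigma R$-deductively closed (resp. $SR$-deductively closed) if it is closed under reflexivity, symmetry, transitivity, variable substitution, and: $t\approx s\in\Gamma$, $r\in SEss(t,\Gamma)\cap SEss(s,\Gamma)$ imply $t^\Gamma(r\leftarrow u)\approx s^\Gamma(r\leftarrow u)\in\Gamma$ (resp. $t(r*u)\approx s(r*u)\in\Gamma$) for all $u$. $\Sigma R(\Sigma)$ and $SR(\Sigma)$ are the smallest such sets containing $\Sigma$. *)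

(* Defs.v *)
From Stdlib Require Import List Arith PeanoNat Classical ClassicalEpsilon.
Import ListNotations.

(* Terms of type (2) over X = {x_1, x_2, ...}; Var i stands for x_(i+1). *)
Inductive term : Type :=
| Var : nat -> term
| App : term -> term -> term.

Definition identity : Type := (term * term)%type.
Definition idset : Type := identity -> Prop.

(* Positions: words over {1,2}; false = 1 (left child), true = 2 (right). *)
Definition pos : Type := list bool.

Definition prefix (p q : pos) : Prop := exists s, q = p ++ s.

Fixpoint subterm (t : term) (p : pos) : option term :=
  match p with
  | [] => Some t
  | b :: p' => match t with
               | Var _ => None
               | App a c => subterm (if b then c else a) p'
               end
  end.

Definition in_Pos (t : term) (p : pos) : Prop := subterm t p <> None.

Fixpoint replace_at (t : term) (p : pos) (r : term) : term :=
  match p with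
  | [] => r
  | b :: p' => match t with
               | Var _ => t
               | App a c => if b then App a (replace_at c p' r)
                            else App (replace_at a p' r) c
               end
  end.

Fixpoint subst_var (t : term) (x : nat) (r : term) : term :=
  match t with
  | Var y => if Nat.eqb x y then r else t
  | App a c => App (subst_var a x r) (subst_var c x r)
  end.

Fixpoint maxvar (t : term) : nat :=
  match t with
  | Var i => i
  | App a c => Nat.max (maxvar a) (maxvar c)
  end.

(* t ∈ W(X_n) with n = fresh t; the variable x_(n+1) is Var n. *)
Definition fresh (t : term) : nat := S (maxvar t).

Fixpoint eval {A : Type} (op : A -> A -> A) (v : nat -> A) (t : term) : A :=
  match t with
  | Var i => v i
  | App a c => op (eval op v a) (eval op v c)
  end.

Definition sat {A : Type} (op : A -> A -> A) (e : identity) : Prop :=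
  forall v : nat -> A, eval op v (fst e) = eval op v (snd e).

Definition models (G : idset) {A : Type} (op : A -> A -> A) : Prop :=
  forall e, G e -> sat op e.

Definition entails (G : idset) (e : identity) : Prop :=
  forall (A : Type) (op : A -> A -> A), models G op -> sat op e.

Definition upd {A : Type} (v : nat -> A) (x : nat) (a : A) : nat -> A :=
  fun y => if Nat.eqb y x then a else v y.

Definition PEss (G : idset) (t : term) (p : pos) : Prop :=
  in_Pos t p /\
  exists (A : Type) (op : A -> A -> A), models G op /\
    exists (v : nat -> A) (a b : A),
      eval op (upd v (fresh t) a) (replace_at t p (Var (fresh t)))
      <> eval op (upd v (fresh t) b) (replace_at t p (Var (fresh t))).

Definition SEss (G : idset) (t r : term) : Prop :=
  exists p s, PEss G t p /\ subterm t p = Some s /\ entails G (r, s).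

Definition Pcand (G : idset) (t r : term) (p : pos) : Prop :=
  exists s, subterm t p = Some s /\ entails G (s, r).

Definition Pset (G : idset) (t r : term) (p : pos) : Prop :=
  Pcand G t r p /\ forall q, Pcand G t r q -> prefix q p -> q = p.

Definition EPset (G : idset) (t r : term) (p : pos) : Prop :=
  Pset G t r p /\ forall q, in_Pos t q -> prefix p q -> PEss G t q.

(* For an antichain of positions (as P_r^t, EP_r^t are) this replaces exactly
   the subterms at all those positions; it is t if no position of t is in P. *)
Fixpoint replace_set (P : pos -> Prop) (t u : term) : term :=
  if excluded_middle_informative (P []) then u
  else match t with
       | Var _ => t
       | App a c => App (replace_set (fun p => P (false :: p)) a u)
                        (replace_set (fun p => P (true :: p)) c u)
       end.

Definition sigma_comp (G : idset) (t r u : term) : term :=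
  replace_set (Pset G t r) t u.

Definition ess_comp (G : idset) (t r u : term) : term :=
  replace_set (EPset G t r) t u.

Definition basic_closed (G : idset) : Prop :=
  (forall t, G (t, t)) /\
  (forall t s, G (t, s) -> G (s, t)) /\
  (forall t s w, G (t, s) -> G (s, w) -> G (t, w)) /\
  (forall t s x r, G (t, s) -> G (subst_var t x r, subst_var s x r)).

Definition SigmaR_closed (G : idset) : Prop :=
  basic_closed G /\
  forall t s r u, G (t, s) -> SEss G t r -> SEss G s r ->
    G (sigma_comp G t r u, sigma_comp G s r u).

Definition SR_closed (G : idset) : Prop :=
  basic_closed G /\
  forall t s r u, G (t, s) -> SEss G t r -> SEss G s r ->
    G (ess_comp G t r u, ess_comp G s r u).

Definition incl (G H : idset) : Prop := forall e, G e -> H e.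

Definition strict_incl (G H : idset) : Prop :=
  incl G H /\ exists e, H e /\ ~ G e.

Definition least_closure (C : idset -> Prop) (S G : idset) : Prop :=
  C G /\ incl S G /\ forall H, C H -> incl S H -> incl G H.

Inductive D (S : idset) : idset :=
| D_base : forall e, S e -> D S e
| D_refl : forall t, D S (t, t)
| D_sym : forall t s, D S (t, s) -> D S (s, t)
| D_trans : forall t s w, D S (t, s) -> D S (s, w) -> D S (t, w)
| D_subst : forall t s x r, D S (t, s) -> D S (subst_var t x r, subst_var s x r)
| D_repl : forall t s r p, D S (t, s) -> subterm r p = Some t ->
    D S (replace_at r p s, r).

(* Main.v *)
Require Import Defs.
From Stdlib Require Import List Arith PeanoNat Lia Classical ClassicalEpsilon.
Import ListNotations.
Import Defs.

Lemma upd_eq {A} (v : nat -> A) x a : upd v x a x = a.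
Proof. unfold upd. now rewrite Nat.eqb_refl. Qed.

Lemma upd_neq {A} (v : nat -> A) x a y : y <> x -> upd v x a y = v y.
Proof. intros H. unfold upd. destruct (Nat.eqb_spec y x); congruence. Qed.

Lemma eval_subst {A} (op : A -> A -> A) v t x r :
  eval op v (subst_var t x r) = eval op (upd v x (eval op v r)) t.
Proof.
  induction t as [y|a IHa b IHb]; simpl.
  - unfold upd. rewrite Nat.eqb_sym. destruct (Nat.eqb y x); reflexivity.
  - now rewrite IHa, IHb.
Qed.

Lemma eval_ext {A} (op : A -> A -> A) v w t :
  (forall n, n <= maxvar t -> v n = w n) -> eval op v t = eval op w t.
Proof.
  induction t as [y|a IHa b IHb]; simpl; intros H.
  - apply H. lia.
  - rewrite IHa, IHb; auto; intros n Hn; apply H; lia.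
Qed.

Lemma subst_notin t x r : maxvar t < x -> subst_var t x r = t.
Proof.
  induction t as [y|a IHa b IHb]; simpl; intros H.
  - destruct (Nat.eqb_spec x y); [lia|reflexivity].
  - rewrite IHa, IHb; auto; lia.
Qed.

Lemma replace_nil t r : replace_at t [] r = r.
Proof. destruct t; reflexivity. Qed.

Lemma replace_cons_app a c b p r :
  replace_at (App a c) (b :: p) r =
  if b then App a (replace_at c p r) else App (replace_at a p r) c.
Proof. reflexivity. Qed.

Lemma maxvar_replace t p r :
  maxvar (replace_at t p r) <= Nat.max (maxvar t) (maxvar r).
Proof.
  revert t; induction p as [|b p IH]; intros t.
  - rewrite replace_nil. apply Nat.le_max_r.
  - destruct t as [y|a c]; simpl.
    + apply Nat.le_max_l.
    + destruct b; simpl.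
      * specialize (IH c). lia.
      * specialize (IH a). lia.
Qed.

Lemma prefix_nil q : prefix q [] -> q = [].
Proof. intros [s Hs]. destruct q; [reflexivity| discriminate]. Qed.

Lemma prefix_one q b : prefix q [b] -> q = [] \/ q = [b].
Proof.
  intros [s Hs]. destruct q as [|c q]; [now left|].
  simpl in Hs. inversion Hs; subst. destruct q; [now right| discriminate].
Qed.

Lemma prefix_refl p : prefix p p.
Proof. exists []. now rewrite app_nil_r. Qed.

Lemma rs_empty (P : pos -> Prop) t u :
  (forall p, ~ P p) -> replace_set P t u = t.
Proof.
  revert P; induction t as [y|a IHa b IHb]; intros P HP; simpl.
  - destruct (excluded_middle_informative (P [])) as [h|h]; [exfalso; eapply HP; eauto|reflexivity].
  - destruct (excluded_middle_informative (P [])) as [h|h]; [exfalso; eapply HP; eauto|].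
    rewrite IHa, IHb; auto; intros p Hp; eapply HP; eauto.
Qed.

Lemma rs_root (P : pos -> Prop) t u : P [] -> replace_set P t u = u.
Proof.
  intros H. destruct t; simpl; destruct (excluded_middle_informative (P [])); tauto.
Qed.

Lemma rs_shallow (P : pos -> Prop) i j u : ~ P [] ->
  replace_set P (App (Var i) (Var j)) u =
  App (if excluded_middle_informative (P [false]) then u else Var i)
      (if excluded_middle_informative (P [true]) then u else Var j).
Proof.
  intros H. simpl. destruct (excluded_middle_informative (P [])); [tauto|]. reflexivity.
Qed.

Lemma rs_app (P : pos -> Prop) a b u : ~ P [] ->
  replace_set P (App a b) u =
  App (replace_set (fun p => P (false :: p)) a u) (replace_set (fun p => P (true :: p)) b u).
Proof.
  intros H. simpl. destruct (excluded_middle_informative (P [])); [tauto|]. reflexivity.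
Qed.

Lemma rs_var (P : pos -> Prop) i u : ~ P [] -> replace_set P (Var i) u = Var i.
Proof.
  intros H. simpl. destruct (excluded_middle_informative (P [])); [tauto|]. reflexivity.
Qed.

Section BC.
Variable G : idset.
Hypothesis HG : basic_closed G.
Lemma bc_refl t : G (t,t). Proof. destruct HG as (h1&h2&h3&h4). apply h1. Qed.
Lemma bc_sym t s : G (t,s) -> G (s,t). Proof. destruct HG as (h1&h2&h3&h4). apply h2. Qed.
Lemma bc_trans t s w : G (t,s) -> G (s,w) -> G (t,w). Proof. destruct HG as (h1&h2&h3&h4). apply h3. Qed.
Lemma bc_subst t s x r : G (t,s) -> G (subst_var t x r, subst_var s x r). Proof. destruct HG as (h1&h2&h3&h4). apply h4. Qed.
End BC.

Lemma entails_of {G : idset} e : G e -> entails G e.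
Proof. intros H A op Hm. apply Hm, H. Qed.

Lemma entails_refl G t : entails G (t,t).
Proof. intros A op _ v. reflexivity. Qed.

Lemma eval_replace {A} (op : A -> A -> A) r p t s :
  subterm r p = Some t -> (forall v, eval op v t = eval op v s) ->
  forall v, eval op v (replace_at r p s) = eval op v r.
Proof.
  revert r; induction p as [|b p IH]; intros r Hsub Hts v.
  - rewrite replace_nil. destruct r; simpl in Hsub; inversion Hsub; subst; symmetry; apply Hts.
  - destruct r as [y|a c]; simpl in Hsub; [discriminate|].
    rewrite replace_cons_app. destruct b; simpl; rewrite IH; auto.
Qed.

Lemma D_sound (S : idset) {A} (op : A -> A -> A) :
  models S op -> forall e, D S e -> sat op e.
Proof.
  intros HS e HD. induction HD; unfold sat in *; simpl in *; intros v.
  - apply HS; auto.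
  - reflexivity.
  - symmetry; auto.
  - rewrite IHHD1; auto.
  - rewrite !eval_subst. apply IHHD.
  - apply (eval_replace op r p t s); auto.
Qed.

Definition S1 : idset := fun e => e = (App (Var 0) (Var 1), Var 0).
Definition full : idset := fun _ => True.

Fixpoint lv (t : term) : nat := match t with Var i => i | App a _ => lv a end.
Definition lz (a b : bool) : bool := a.
Lemma eval_lz v t : eval lz v t = v (lv t).
Proof. induction t; simpl; auto. Qed.

Section P1.
Variable H : idset.
Hypothesis HB : basic_closed H.
Hypothesis HS : incl S1 H.

Lemma H_s0 : H (App (Var 0) (Var 1), Var 0).
Proof. apply HS. reflexivity. Qed.

Lemma H_app a b : H (App a b, a).
Proof.
  set (N := 2 + maxvar a + maxvar b).
  pose proof (bc_subst H HB _ _ 0 (Var N) H_s0) as h1. simpl in h1.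
  pose proof (bc_subst H HB _ _ 1 b h1) as h2. simpl in h2.
  assert (E: Nat.eqb 1 N = false) by (apply Nat.eqb_neq; unfold N; lia).
  try rewrite E in h2.
  pose proof (bc_subst H HB _ _ N a h2) as h3. simpl in h3.
  try rewrite Nat.eqb_refl in h3. rewrite (subst_notin b) in h3 by (unfold N; lia). exact h3.
Qed.

Lemma H_lv t : H (t, Var (lv t)).
Proof.
  induction t as [i|a IHa b IHb]; simpl.
  - apply (bc_refl H HB).
  - eapply (bc_trans H HB); [apply H_app| exact IHa].
Qed.

Lemma H_full_of i j : i <> j -> H (Var i, Var j) -> forall e, H e.
Proof.
  intros Hij Hv [t s].
  assert (Hx : forall w, H (Var i, w)).
  { intros w. pose proof (bc_subst H HB _ _ j w Hv) as h. simpl in h.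
    rewrite Nat.eqb_refl in h. destruct (Nat.eqb_spec j i); [lia|]. exact h. }
  eapply (bc_trans H HB); [apply (bc_sym H HB); apply Hx| apply Hx].
Qed.
End P1.

Lemma P1_main H : SR_closed H -> incl S1 H -> forall e, H e.
Proof.
  intros [HB HR] HS.
  destruct (classic (forall e, H e -> sat lz e)) as [Hm|Hm].
  - pose (s0 := App (Var 0) (Var 1)).
    assert (Hs0 : H (s0, Var 0)) by (exact (H_s0 H HS)).
    assert (E1 : entails H (s0, Var 0)) by (apply entails_of; auto).
    assert (Hop : forall (A : Type) (op : A -> A -> A), models H op -> forall x y, op x y = x).
    { intros A op Hmo x y. specialize (Hmo _ Hs0 (fun n => if Nat.eqb n 0 then x else y)).
      simpl in Hmo. exact Hmo. }
    assert (PE0 : PEss H (Var 0) []).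
    { split; [simpl; discriminate|]. exists bool, lz. split; [exact Hm|].
      exists (fun _ => true), true, false. simpl. rewrite !upd_eq. discriminate. }
    assert (PEs : PEss H s0 []).
    { split; [simpl; discriminate|]. exists bool, lz. split; [exact Hm|].
      exists (fun _ => true), true, false. rewrite replace_nil. simpl. rewrite !upd_eq. discriminate. }
    assert (NPE : ~ PEss H s0 [true]).
    { intros [_ (A & op & Hmo & v & a & b & Hne)]. apply Hne. simpl.
      rewrite !(Hop A op Hmo). reflexivity. }
    assert (Hr := HR (Var 0) s0 (Var 0) (Var 1) (bc_sym H HB _ _ Hs0)).
    assert (C1 : ess_comp H (Var 0) (Var 0) (Var 1) = Var 1).
    { unfold ess_comp. apply rs_root. split.
      - split. + exists (Var 0). split; [reflexivity| apply entails_refl].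
        + intros q _ Hq. apply prefix_nil; auto.
      - intros q Hq _. destruct q; [exact PE0| simpl in Hq; contradiction]. }
    assert (C2 : ess_comp H s0 (Var 0) (Var 1) = s0).
    { unfold ess_comp. apply rs_empty. intros p [[[w [Hw Hew]] Hmin] Hall].
      destruct p as [|b p].
      - apply NPE. apply Hall; [simpl; discriminate| exists [true]; reflexivity].
      - assert (Hc : Pcand H s0 (Var 0) []) by (exists s0; split; auto).
        specialize (Hmin [] Hc (ex_intro _ (b::p) eq_refl)). discriminate. }
    rewrite C1, C2 in Hr.
    assert (Hx : H (Var 1, s0)).
    { apply Hr.
      - exists [], (Var 0). split; [exact PE0| split; [reflexivity| apply entails_refl]].
      - exists [], s0. split; [exact PEs| split; [reflexivity|]].
        apply entails_of. apply (bc_sym H HB). exact Hs0. }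
    apply (H_full_of H HB 1 0); [lia|]. apply (bc_trans H HB) with s0; [exact Hx|exact Hs0].
  - apply not_all_ex_not in Hm. destruct Hm as [[t s] Hm].
    apply imply_to_and in Hm. destruct Hm as [Hts Hns].
    assert (Hne : lv t <> lv s).
    { intros E. apply Hns. intros v. simpl. rewrite !eval_lz, E. reflexivity. }
    apply (H_full_of H HB (lv t) (lv s) Hne).
    eapply (bc_trans H HB); [apply (bc_sym H HB); apply H_lv; auto|].
    eapply (bc_trans H HB); [exact Hts| apply H_lv; auto].
Qed.

Lemma part1 : exists G1, least_closure SR_closed S1 G1 /\ strict_incl (D S1) G1.
Proof.
  exists full. split; [split; [|split]|].
  - split; [repeat split; intros; exact I| intros; exact I].
  - intros e _; exact I.
  - intros H HH HS e _. apply P1_main; auto.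
  - split; [intros e _; exact I|].
    exists (Var 0, Var 1). split; [exact I|]. intros HD.
    assert (HM : models S1 lz).
    { intros e He. rewrite He. intros v. reflexivity. }
    pose proof (D_sound S1 lz HM _ HD (fun n => Nat.eqb n 0)). simpl in H. discriminate.
Qed.

Inductive t3 := A0 | A1 | A2.
Definition op1 (x y : t3) : t3 := match x, y with A2, A2 => A1 | _, _ => A0 end.
Inductive t4 := B0 | B1 | B2 | B3.
Definition op4 (x y : t4) : t4 :=
  match x, y with B2, B3 => B1 | B3, B2 => B1 | _, _ => B0 end.

Definition S2 : idset := fun e => sat op1 e.
Definition isApp (t : term) : bool := match t with App _ _ => true | _ => false end.
Definition deep (t : term) : Prop :=
  match t with Var _ => False | App a b => isApp a = true \/ isApp b = true end.
Definition cZ : term := App (App (Var 0) (Var 0)) (Var 0).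
Definition IdZ : idset := fun e => fst e = snd e \/ (isApp (fst e) = true /\ isApp (snd e) = true).

Lemma sv_app a b x r : subst_var (App a b) x r = App (subst_var a x r) (subst_var b x r).
Proof. reflexivity. Qed.
Lemma sv_eq x r : subst_var (Var x) x r = r.
Proof. simpl. now rewrite Nat.eqb_refl. Qed.
Lemma sv_neq x y r : x <> y -> subst_var (Var y) x r = Var y.
Proof. intros H. simpl. destruct (Nat.eqb_spec x y); congruence. Qed.

Lemma isApp_subst t x r : isApp t = true -> isApp (subst_var t x r) = true.
Proof. destruct t; simpl; [discriminate|reflexivity]. Qed.
Lemma deep_subst t x r : deep t -> deep (subst_var t x r).
Proof. destruct t as [n|a b]; simpl; [tauto|]. intros [h|h]; [left|right]; apply isApp_subst; auto. Qed.

Lemma op1_ne2 x y : op1 x y <> A2.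
Proof. destruct x, y; simpl; discriminate. Qed.
Lemma eval1_app a b v : eval op1 v (App a b) <> A2.
Proof. simpl. apply op1_ne2. Qed.
Lemma eval1_isApp t v : isApp t = true -> eval op1 v t <> A2.
Proof. destruct t; simpl; [discriminate|]. intros _; apply op1_ne2. Qed.
Lemma deep_eval1 t v : deep t -> eval op1 v t = A0.
Proof.
  destruct t as [|a b]; simpl; [tauto|]. intros [h|h].
  - pose proof (eval1_isApp a v h). destruct (eval op1 v a), (eval op1 v b); simpl; congruence.
  - pose proof (eval1_isApp b v h). destruct (eval op1 v a), (eval op1 v b); simpl; congruence.
Qed.
Lemma eval4_isApp t v : isApp t = true -> eval op4 v t = B0 \/ eval op4 v t = B1.
Proof. destruct t; simpl; [discriminate|]. intros _. destruct (eval op4 v t1), (eval op4 v t2); simpl; auto. Qed.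
Lemma deep_eval4 t v : deep t -> eval op4 v t = B0.
Proof.
  destruct t as [|a b]; simpl; [tauto|]. intros [h|h].
  - destruct (eval4_isApp a v h) as [e|e]; rewrite e; destruct (eval op4 v b); reflexivity.
  - destruct (eval4_isApp b v h) as [e|e]; rewrite e; destruct (eval op4 v a); reflexivity.
Qed.
Lemma S2_deep t s : deep t -> deep s -> S2 (t,s).
Proof. intros ht hs v. simpl. rewrite !deep_eval1; auto. Qed.

Lemma S2_basic : basic_closed S2.
Proof.
  unfold basic_closed, S2, sat. split; [|split; [|split]].
  - intros t v; reflexivity.
  - intros t s h v; symmetry; apply h.
  - intros t s w h1 h2 v; simpl in *; rewrite (h1 v); apply h2.
  - intros t s x r h v; simpl in *; rewrite !eval_subst; apply h.
Qed.

Lemma entails_S2 e : entails S2 e <-> sat op1 e.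
Proof.
  split.
  - intros h. apply h. intros e' he'. exact he'.
  - intros h A op hm. apply hm. exact h.
Qed.

Lemma var_eq i s : sat op1 (Var i, s) -> s = Var i.
Proof.
  intros h. destruct s as [j|a b].
  - destruct (Nat.eqb_spec i j) as [->|hne]; [reflexivity|].
    exfalso. specialize (h (fun n => if Nat.eqb n i then A2 else A0)). simpl in h.
    rewrite Nat.eqb_refl in h. destruct (Nat.eqb_spec j i); [congruence|discriminate].
  - exfalso. specialize (h (fun _ => A2)). simpl in h. symmetry in h. apply (op1_ne2 _ _ h).
Qed.

Lemma NPE t q : deep (replace_at t q (Var (fresh t))) -> ~ PEss S2 t q.
Proof.
  intros hd [_ (A & op & hm & v & a & b & hne)]. apply hne.
  set (z := fresh t) in *. set (T := replace_at t q (Var z)) in *.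
  assert (hmx : maxvar T <= z).
  { unfold T. pose proof (maxvar_replace t q (Var z)). simpl in H. unfold z, fresh in *. lia. }
  assert (he : S2 (T, subst_var T z (Var (S z)))) by (apply S2_deep; auto; apply deep_subst; auto).
  specialize (hm _ he (upd (upd v z a) (S z) b)). simpl in hm.
  rewrite eval_subst in hm. simpl in hm. rewrite upd_eq in hm.
  rewrite (eval_ext op _ (upd v z a)) in hm.
  2:{ intros n hn. apply upd_neq. lia. }
  rewrite (eval_ext op (upd (upd (upd v z a) (S z) b) z b) (upd v z b)) in hm.
  2:{ intros n hn. unfold upd. destruct (Nat.eqb_spec n z); [reflexivity|].
      destruct (Nat.eqb_spec n (S z)); [lia|]. reflexivity. }
  exact hm.
Qed.

Lemma replace_app_cons c b p r : isApp c = true -> isApp (replace_at c (b :: p) r) = true.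
Proof. destruct c; simpl; [discriminate|]. destruct b; reflexivity. Qed.

Lemma in_Pos_cons_app c b p : in_Pos c (b :: p) -> isApp c = true.
Proof. destruct c; [unfold in_Pos; simpl; tauto| reflexivity]. Qed.

Lemma subterm_nil t : subterm t [] = Some t.
Proof. destruct t; reflexivity. Qed.
Ltac inpos := unfold in_Pos; simpl; try rewrite subterm_nil; discriminate.
Ltac npe q := match goal with hall : forall q, in_Pos ?T q -> _ |- _ => apply (NPE T q) end.

Lemma noEP_deep t r p : deep t -> ~ EPset S2 t r p.
Proof.
  intros hd [[[w [hw _]] _] hall].
  assert (hp : in_Pos t p) by (unfold in_Pos; rewrite hw; discriminate).
  set (z := Var (fresh t)) in *.
  destruct t as [|a c]; [simpl in hd; tauto|].
  destruct p as [|b1 [|b2 p']].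
  - destruct hd as [ha|hc].
    + destruct a as [|a1 a2]; [discriminate|].
      npe ([false;false]); [simpl; auto|].
      apply hall; [inpos| exists [false;false]; reflexivity].
    + destruct c as [|c1 c2]; [discriminate|].
      npe ([true;false]); [simpl; auto|].
      apply hall; [inpos| exists [true;false]; reflexivity].
  - destruct b1.
    + destruct (isApp a) eqn:ha.
      * npe ([true]); [simpl; auto|]. apply hall; auto. apply prefix_refl.
      * destruct hd as [h|hc]; [congruence|].
        destruct c as [|c1 c2]; [discriminate|].
        npe ([true;false]); [simpl; auto|].
        apply hall; [inpos| exists [false]; reflexivity].
    + destruct (isApp c) eqn:hc.
      * npe ([false]); [simpl; auto|]. apply hall; auto. apply prefix_refl.
      * destruct hd as [ha|h]; [|congruence].
        destruct a as [|a1 a2]; [discriminate|].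
        npe ([false;false]); [simpl; auto|].
        apply hall; [inpos| exists [false]; reflexivity].
  - npe ((b1 :: b2 :: p')); [|apply hall; auto; apply prefix_refl].
    destruct b1; simpl.
    + right. apply replace_app_cons. apply (in_Pos_cons_app c b2 p'). exact hp.
    + left. apply replace_app_cons. apply (in_Pos_cons_app a b2 p'). exact hp.
Qed.

Lemma allPE_shallow i j q : in_Pos (App (Var i) (Var j)) q -> PEss S2 (App (Var i) (Var j)) q.
Proof.
  intros hq.
  assert (hz : fresh (App (Var i) (Var j)) = S (Nat.max i j)) by reflexivity.
  destruct q as [|b [|b' q]].
  - split; [inpos|]. exists t3, op1. split; [intros e h; exact h|].
    exists (fun _ => A2), A0, A1. rewrite replace_nil. simpl. rewrite !upd_eq. discriminate.
  - split; [exact hq|]. exists t3, op1. split; [intros e h; exact h|].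
    exists (fun _ => A2), A2, A0. rewrite hz. destruct b; simpl.
    + rewrite !upd_eq, !upd_neq by lia. discriminate.
    + rewrite !upd_eq, !upd_neq by lia. discriminate.
  - exfalso. unfold in_Pos in hq. destruct b; simpl in hq; apply hq; reflexivity.
Qed.

Definition rho (r u : term) (n : nat) : term :=
  if excluded_middle_informative (sat op1 (Var n, r)) then u else Var n.

Lemma ess_shallow i j r u :
  ess_comp S2 (App (Var i) (Var j)) r u =
  if excluded_middle_informative (sat op1 (App (Var i) (Var j), r)) then u
  else App (rho r u i) (rho r u j).
Proof.
  unfold ess_comp. set (t := App (Var i) (Var j)).
  assert (EP_iff : forall p, EPset S2 t r p <-> Pset S2 t r p).
  { intros p; split; [intros h; apply h|]. intros h; split; auto.
    intros q hq _; apply allPE_shallow; auto. }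
  destruct (excluded_middle_informative (sat op1 (t, r))) as [h|h].
  - apply rs_root. apply EP_iff. split.
    + exists t. split; [apply subterm_nil| apply entails_S2; auto].
    + intros q _ hq; apply prefix_nil; auto.
  - unfold t. rewrite rs_shallow.
    2:{ intro hE; apply EP_iff in hE; destruct hE as [[w [hw he]] _].
        rewrite subterm_nil in hw; inversion hw; subst. exfalso; exact (h (proj1 (entails_S2 _) he)). }
    unfold rho. f_equal.
    + destruct (excluded_middle_informative (EPset S2 (App (Var i) (Var j)) r [false])) as [e1|e1];
      destruct (excluded_middle_informative (sat op1 (Var i, r))) as [e2|e2]; auto.
      * exfalso. apply EP_iff in e1. destruct e1 as [[w [hw he]] _]. simpl in hw.
        inversion hw; subst. exact (e2 (proj1 (entails_S2 _) he)).
      * exfalso. apply e1, EP_iff. split.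
        -- exists (Var i). split; [reflexivity| apply entails_S2; auto].
        -- intros q [w [hw he]] hq. destruct (prefix_one _ _ hq) as [->| ->]; auto.
           rewrite subterm_nil in hw; inversion hw; subst. exfalso; exact (h (proj1 (entails_S2 _) he)).
    + destruct (excluded_middle_informative (EPset S2 (App (Var i) (Var j)) r [true])) as [e1|e1];
      destruct (excluded_middle_informative (sat op1 (Var j, r))) as [e2|e2]; auto.
      * exfalso. apply EP_iff in e1. destruct e1 as [[w [hw he]] _]. simpl in hw.
        inversion hw; subst. exact (e2 (proj1 (entails_S2 _) he)).
      * exfalso. apply e1, EP_iff. split.
        -- exists (Var j). split; [reflexivity| apply entails_S2; auto].
        -- intros q [w [hw he]] hq. destruct (prefix_one _ _ hq) as [->| ->]; auto.
           rewrite subterm_nil in hw; inversion hw; subst. exfalso; exact (h (proj1 (entails_S2 _) he)).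
Qed.

Lemma shallow_inv a b : ~ deep (App a b) -> exists i j, a = Var i /\ b = Var j.
Proof.
  intros h. destruct a as [i|], b as [j|]; simpl in h; eauto; exfalso; apply h; auto.
Qed.

Lemma deep_shallow_ne t i j : deep t -> ~ sat op1 (t, App (Var i) (Var j)).
Proof.
  intros hd h. specialize (h (fun _ => A2)). simpl in h. rewrite deep_eval1 in h; auto. discriminate.
Qed.

Lemma SR_S2 : SR_closed S2.
Proof.
  split; [exact S2_basic|]. intros t s r u hts _ _.
  destruct t as [i|a b].
  - assert (s = Var i) by (apply var_eq; exact hts). subst. apply (bc_refl _ S2_basic).
  - destruct (classic (deep (App a b))) as [hd|hnd].
    + assert (hds : deep s).
      { destruct s as [k|c d].
        - exfalso. assert (App a b = Var k) by (apply var_eq; apply (bc_sym _ S2_basic); exact hts). discriminate.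
        - destruct (classic (deep (App c d))) as [h|h]; auto.
          destruct (shallow_inv _ _ h) as (k & l & -> & ->). exfalso. eapply deep_shallow_ne; eauto. }
      unfold ess_comp. rewrite !rs_empty by (intros p; apply noEP_deep; auto). exact hts.
    + destruct (shallow_inv _ _ hnd) as (i & j & -> & ->).
      destruct s as [k|c d].
      { exfalso. assert (App (Var i) (Var j) = Var k) by (apply var_eq; apply (bc_sym _ S2_basic); exact hts). discriminate. }
      destruct (classic (deep (App c d))) as [h|h].
      { exfalso. eapply deep_shallow_ne; eauto. apply (bc_sym _ S2_basic); exact hts. }
      destruct (shallow_inv _ _ h) as (k & l & -> & ->).
      rewrite !ess_shallow.
      destruct (excluded_middle_informative (sat op1 (App (Var i) (Var j), r))) as [h1|h1];
      destruct (excluded_middle_informative (sat op1 (App (Var k) (Var l), r))) as [h2|h2].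
      * apply (bc_refl _ S2_basic).
      * exfalso. apply h2. intros v. specialize (hts v); specialize (h1 v); simpl in *; congruence.
      * exfalso. apply h1. intros v. specialize (hts v); specialize (h2 v); simpl in *; congruence.
      * intros v. specialize (hts (fun n => eval op1 v (rho r u n))). simpl in *. exact hts.
Qed.

Lemma IdZ_basic : basic_closed IdZ.
Proof.
  unfold basic_closed, IdZ; simpl. split; [|split; [|split]].
  - intros t; left; reflexivity.
  - intros t s [h|h]; [left; auto| right; tauto].
  - intros t s w [h1|h1] [h2|h2]; subst; auto; right; tauto.
  - intros t s x r [h|h]; [left; subst; auto| right; split; apply isApp_subst; tauto].
Qed.

Definition zop (a b : bool) : bool := false.

Lemma zop_models : models IdZ zop.
Proof.
  intros [t s] [h|h] v; simpl in *; [subst; reflexivity|].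
  destruct t, s; simpl in *; try reflexivity; destruct h; discriminate.
Qed.

Lemma entails_IdZ_app t r : isApp t = true -> entails IdZ (t, r) -> isApp r = true.
Proof.
  intros ht he. destruct r as [i|]; [|reflexivity].
  specialize (he bool zop zop_models (fun _ => true)). destruct t; simpl in *; discriminate.
Qed.

Lemma sigma_IdZ t r u : isApp t = true ->
  (isApp r = true -> sigma_comp IdZ t r u = u) /\
  (isApp r = false -> isApp (sigma_comp IdZ t r u) = true).
Proof.
  intros ht. split; intros hr.
  - unfold sigma_comp. apply rs_root. split.
    + exists t. split; [apply subterm_nil| apply entails_of; unfold IdZ; right; auto].
    + intros q _ hq; apply prefix_nil; auto.
  - unfold sigma_comp. destruct t as [|a b]; [discriminate|]. rewrite rs_app; [reflexivity|].
    intros [[w [hw he]] _]. rewrite subterm_nil in hw. inversion hw; subst.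
    apply entails_IdZ_app in he; auto. congruence.
Qed.

Lemma SigmaR_IdZ : SigmaR_closed IdZ.
Proof.
  split; [exact IdZ_basic|]. intros t s r u [h|[h1 h2]] _ _; simpl in *.
  - subst. left; reflexivity.
  - destruct (isApp r) eqn:hr.
    + left. simpl. rewrite (proj1 (sigma_IdZ t r u h1) hr), (proj1 (sigma_IdZ s r u h2) hr). reflexivity.
    + right. simpl. split; apply sigma_IdZ; auto.
Qed.

Lemma S2_IdZ : incl S2 IdZ.
Proof.
  intros [t s] h. unfold IdZ; simpl.
  destruct t as [i|a b].
  - left. symmetry. apply var_eq. exact h.
  - destruct s as [k|c d].
    + left. apply var_eq. apply (bc_sym _ S2_basic). exact h.
    + right; split; reflexivity.
Qed.

Definition sat4 := sat op4.

Section KS.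
Variable K : idset.
Hypothesis HB : basic_closed K.
Hypothesis HS : incl S2 K.

Lemma K_deep t s : deep t -> deep s -> K (t, s).
Proof. intros; apply HS, S2_deep; auto. Qed.

Lemma K_sym t s : K (t,s) -> K (s,t). Proof. apply bc_sym; auto. Qed.
Lemma K_trans t s w : K (t,s) -> K (s,w) -> K (t,w). Proof. apply bc_trans; auto. Qed.
Lemma K_subst t s x r : K (t,s) -> K (subst_var t x r, subst_var s x r). Proof. apply bc_subst; auto. Qed.

Lemma cZ_deep : deep cZ. Proof. simpl; auto. Qed.

Lemma K_Z_of_shallow i j d : i <> j -> deep d -> K (App (Var i) (Var j), d) ->
  forall a b, K (App a b, cZ).
Proof.
  intros hij hd h a b.
  set (M := S (i + j + maxvar a + maxvar b)).
  pose proof (K_subst _ _ i (Var M) h) as h1.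
  rewrite sv_app, sv_eq, sv_neq in h1 by auto.
  pose proof (K_subst _ _ j b h1) as h2.
  rewrite sv_app, sv_eq, sv_neq in h2 by (unfold M; lia).
  pose proof (K_subst _ _ M a h2) as h3.
  rewrite sv_app, sv_eq, (subst_notin b) in h3 by (unfold M; lia).
  eapply K_trans; [exact h3|]. apply K_deep; [|exact cZ_deep].
  repeat apply deep_subst. exact hd.
Qed.

Lemma K_Z_all : (forall a b, K (App a b, cZ)) -> incl IdZ K.
Proof.
  intros hZ [t s] [h|[h1 h2]]; simpl in *.
  - subst. apply bc_refl; auto.
  - destruct t as [|a b]; [discriminate|]. destruct s as [|c d]; [discriminate|].
    eapply K_trans; [apply hZ| apply K_sym, hZ].
Qed.

Fixpoint occ (x : nat) (t : term) : bool :=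
  match t with Var y => Nat.eqb x y | App a b => occ x a || occ x b end.

Lemma subst_notocc x t r : occ x t = false -> subst_var t x r = t.
Proof.
  induction t as [y|a IHa b IHb]; simpl; intros h.
  - rewrite h; reflexivity.
  - apply Bool.orb_false_iff in h. rewrite IHa, IHb; tauto.
Qed.

Lemma deep_subst_occ w i r : isApp w = true -> occ i w = true -> isApp r = true ->
  deep (subst_var w i r).
Proof.
  intros hw ho hr. destruct w as [|a b]; [discriminate|]. simpl in ho. rewrite sv_app.
  unfold deep.
  apply Bool.orb_true_iff in ho.
  destruct a as [y|a1 a2].
  - destruct ho as [ho|ho].
    + simpl in ho. apply Nat.eqb_eq in ho. subst. rewrite sv_eq. left; exact hr.
    + right. destruct b as [z|b1 b2]; [|reflexivity].
      simpl in ho. apply Nat.eqb_eq in ho. subst. rewrite sv_eq. exact hr.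
  - left; reflexivity.
Qed.

Lemma K_var i w : w <> Var i -> K (Var i, w) -> forall a b, K (App a b, cZ).
Proof.
  intros hne h.
  destruct (occ i w) eqn:ho.
  - assert (hw : isApp w = true).
    { destruct w as [y|]; [|reflexivity]. simpl in ho. apply Nat.eqb_eq in ho. subst. congruence. }
    set (N := S (i + maxvar w)).
    pose proof (K_subst _ _ i (App (Var i) (Var N)) h) as h1. rewrite sv_eq in h1.
    apply (K_Z_of_shallow i N (subst_var w i (App (Var i) (Var N)))); [unfold N; lia| |exact h1].
    apply deep_subst_occ; auto.
  - pose proof (K_subst _ _ i (App (Var 0) (Var 1)) h) as h1.
    pose proof (K_subst _ _ i cZ h) as h2.
    rewrite sv_eq, subst_notocc in h1, h2 by exact ho.
    apply (K_Z_of_shallow 0 1 cZ); [lia| exact cZ_deep|].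
    eapply K_trans; [exact h1| apply K_sym; exact h2].
Qed.
End KS.

Lemma op4_sym x y : op4 x y = op4 y x.
Proof. destruct x, y; reflexivity. Qed.
Lemma op1_sym x y : op1 x y = op1 y x.
Proof. destruct x, y; reflexivity. Qed.
Lemma sat4_sym a b : ~ sat op4 (a,b) -> ~ sat op4 (b,a).
Proof. intros h h'. apply h. intros v. symmetry. apply h'. Qed.
Lemma sat4_swap i j : sat op4 (App (Var i) (Var j), App (Var j) (Var i)).
Proof. intros v; simpl; apply op4_sym. Qed.
Lemma S2_swap i j : S2 (App (Var i) (Var j), App (Var j) (Var i)).
Proof. intros v; simpl; apply op1_sym. Qed.

Section KS2.
Variable K : idset.
Hypothesis HB : basic_closed K.
Hypothesis HS : incl S2 K.

Lemma H3 i j : i <> j -> K (App (Var i) (Var j), App (Var i) (Var i)) -> forall a b, K (App a b, cZ).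
Proof.
  intros hij e1. set (N := S (i + j)).
  pose proof (K_subst K HB _ _ i (Var N) e1) as h1.
  rewrite !sv_app, !sv_eq, sv_neq in h1 by auto.
  pose proof (K_subst K HB _ _ j (Var i) h1) as h2.
  rewrite !sv_app, !sv_eq, !sv_neq in h2 by (unfold N; lia).
  pose proof (K_subst K HB _ _ N (Var j) h2) as h3.
  rewrite !sv_app, !sv_eq, !sv_neq in h3 by (unfold N; lia).
  assert (h4 : K (App (Var i) (Var i), App (Var j) (Var j))).
  { eapply K_trans; auto; [apply K_sym; auto; exact e1|].
    eapply K_trans; auto; [apply HS, S2_swap| exact h3]. }
  pose proof (K_subst K HB _ _ j cZ h4) as h5.
  rewrite !sv_app, !sv_eq, !sv_neq in h5 by auto.
  apply (K_Z_of_shallow K HB HS i j (App cZ cZ)); auto; [simpl; auto|].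
  eapply K_trans; auto; [exact e1| exact h5].
Qed.

Lemma H2 i j k l : i <> j -> K (App (Var i) (Var j), App (Var k) (Var l)) ->
  ~ sat op4 (App (Var i) (Var j), App (Var k) (Var l)) -> forall a b, K (App a b, cZ).
Proof.
  intros hij h hn.
  destruct (Nat.eq_dec k l) as [<-|hkl].
  - destruct (Nat.eq_dec k i) as [->|hki]; [apply (H3 i j); auto|].
    destruct (Nat.eq_dec k j) as [->|hkj].
    + apply (H3 j i); auto. eapply K_trans; auto; [apply HS, S2_swap| exact h].
    + pose proof (K_subst K HB _ _ k cZ h) as h1.
      rewrite !sv_app, !sv_eq, !sv_neq in h1 by lia.
      apply (K_Z_of_shallow K HB HS i j (App cZ cZ)); auto. simpl; auto.
  - destruct (Nat.eq_dec i k) as [hik|hik]; destruct (Nat.eq_dec i l) as [hil|hil].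
    + exfalso; congruence.
    + destruct (Nat.eq_dec j l) as [hjl|hjl].
      * subst. exfalso. apply hn. intros v. reflexivity.
      * pose proof (K_subst K HB _ _ j cZ h) as h1.
        rewrite !sv_app, !sv_eq, !sv_neq in h1 by lia.
        apply (K_Z_of_shallow K HB HS k l (App (Var i) cZ)); auto; [simpl; auto|].
        apply K_sym; auto.
    + destruct (Nat.eq_dec j k) as [hjk|hjk].
      * subst. exfalso. apply hn. apply sat4_swap.
      * pose proof (K_subst K HB _ _ j cZ h) as h1.
        rewrite !sv_app, !sv_eq, !sv_neq in h1 by lia.
        apply (K_Z_of_shallow K HB HS k l (App (Var i) cZ)); auto; [simpl; auto|].
        apply K_sym; auto.
    + pose proof (K_subst K HB _ _ i cZ h) as h1.
      rewrite !sv_app, !sv_eq, !sv_neq in h1 by lia.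
      apply (K_Z_of_shallow K HB HS k l (App cZ (Var j))); auto; [simpl; auto|].
      apply K_sym; auto.
Qed.

Lemma H1 i j b : K (App (Var i) (Var j), b) -> isApp b = true ->
  ~ sat op4 (App (Var i) (Var j), b) -> forall a b, K (App a b, cZ).
Proof.
  intros h hb hn.
  destruct (classic (deep b)) as [hd|hd].
  - destruct (Nat.eq_dec i j) as [<-|hij].
    + exfalso. apply hn. intros v. simpl. rewrite deep_eval4 by auto.
      destruct (v i); reflexivity.
    + apply (K_Z_of_shallow K HB HS i j b); auto.
  - destruct b as [|b1 b2]; [discriminate|].
    destruct (shallow_inv _ _ hd) as (k & l & -> & ->).
    destruct (Nat.eq_dec i j) as [<-|hij].
    + destruct (Nat.eq_dec k l) as [<-|hkl].
      * exfalso. apply hn. intros v. simpl. destruct (v i), (v k); reflexivity.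
      * apply (H2 k l i i); auto. apply K_sym; auto. apply sat4_sym; auto.
    + apply (H2 i j k l); auto.
Qed.

Lemma K_nonsq a b : K (a,b) -> ~ sat op4 (a,b) -> forall a b, K (App a b, cZ).
Proof.
  intros h hn. destruct a as [i|a1 a2].
  - destruct (classic (b = Var i)) as [->|hb]; [exfalso; apply hn; intros v; reflexivity|].
    apply (K_var K HB HS i b); auto.
  - destruct b as [k|b1 b2].
    + apply (K_var K HB HS k (App a1 a2)); [discriminate| apply K_sym; auto].
    + destruct (classic (deep (App a1 a2))) as [ha|ha].
      * destruct (classic (deep (App b1 b2))) as [hb|hb].
        -- exfalso. apply hn. intros v. change (eval op4 v (App a1 a2) = eval op4 v (App b1 b2)). rewrite (deep_eval4 (App a1 a2)), (deep_eval4 (App b1 b2)) by auto. reflexivity.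
        -- destruct (shallow_inv _ _ hb) as (k & l & -> & ->).
           apply (H1 k l (App a1 a2)); auto; [apply K_sym; auto| apply sat4_sym; auto].
      * destruct (shallow_inv _ _ ha) as (i & j & -> & ->).
        apply (H1 i j (App b1 b2)); auto.
Qed.

Definition rr := App (Var 0) (Var 1).
Definition vq (n : nat) : t4 := match n with 0 => B2 | 1 => B3 | _ => B0 end.

Hypothesis Hm : models K op4.

Lemma not_ent w : eval op4 vq w <> B1 -> ~ entails K (w, rr).
Proof. intros h he. apply h. apply (he _ _ Hm vq). Qed.

Lemma fire_comp n u : 2 <= n -> sigma_comp K (App (Var n) rr) rr u = App (Var n) u.
Proof.
  intros hn.
  assert (n0 : ~ Pset K (App (Var n) rr) rr []).
  { intros [[w [hw he]] _]. rewrite subterm_nil in hw. inversion hw; subst.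
    apply (not_ent (App (Var n) rr) ltac:(simpl; destruct (vq n); discriminate) he). }
  unfold sigma_comp. rewrite rs_app by exact n0. f_equal.
  - apply rs_var. intros [[w [hw he]] _]. simpl in hw. inversion hw; subst.
    apply (not_ent (Var n)); auto. simpl. destruct n as [|[|n]]; [lia|lia|discriminate].
  - apply rs_root. split.
    + exists rr. split; [reflexivity| apply entails_refl].
    + intros q hq hpre. destruct (prefix_one _ _ hpre) as [->| ->]; auto.
      exfalso. destruct hq as [w [hw he]]. rewrite subterm_nil in hw. inversion hw; subst.
      apply (not_ent (App (Var n) rr) ltac:(simpl; destruct (vq n); discriminate) he).
Qed.

Lemma fire_SEss n : 2 <= n -> SEss K (App (Var n) rr) rr.
Proof.
  intros hn. exists [true], rr. split; [|split; [reflexivity| apply entails_refl]].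
  split; [inpos|]. exists t4, op4. split; [exact Hm|].
  exists (fun _ => B2), B3, B0.
  assert (hz : fresh (App (Var n) rr) = S n) by (unfold fresh; simpl; lia).
  rewrite hz. simpl. rewrite !upd_eq, !upd_neq by lia. discriminate.
Qed.
End KS2.

Lemma K_least K : SigmaR_closed K -> incl S2 K -> incl IdZ K.
Proof.
  intros [HB HR] HS. apply (K_Z_all K HB). 
  destruct (classic (forall e, K e -> sat op4 e)) as [Hm|Hm].
  - assert (hts : K (App (Var 2) rr, App (Var 3) rr)) by (apply HS, S2_deep; simpl; auto).
    pose proof (HR _ _ rr (Var 0) hts (fire_SEss K Hm 2 ltac:(lia)) (fire_SEss K Hm 3 ltac:(lia))) as h.
    rewrite !(fire_comp K Hm) in h by lia.
    pose proof (bc_subst K HB _ _ 3 cZ h) as h1.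
    rewrite !sv_app, !sv_eq, !sv_neq in h1 by lia.
    apply (K_Z_of_shallow K HB HS 2 0 (App cZ (Var 0))); auto; simpl; auto.
  - apply not_all_ex_not in Hm. destruct Hm as [[a b] Hm].
    apply imply_to_and in Hm. destruct Hm as [h hn].
    apply (K_nonsq K HB HS a b); auto.
Qed.

Lemma part2 : exists G2 H2, least_closure SR_closed S2 G2 /\
                   least_closure SigmaR_closed S2 H2 /\ strict_incl G2 H2.
Proof.
  exists S2, IdZ. split; [|split].
  - split; [exact SR_S2| split; [intros e h; exact h| intros H _ h; exact h]].
  - split; [exact SigmaR_IdZ| split; [exact S2_IdZ| intros K hK hS; apply K_least; auto]].
  - split; [exact S2_IdZ|]. exists (App (Var 0) (Var 1), cZ). split.
    + right; split; reflexivity.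
    + intros h. specialize (h (fun _ => A2)). simpl in h. discriminate.
Qed.


Theorem proposition6p2 :
  exists S1 S2 : idset,
    (exists G1, least_closure SR_closed S1 G1 /\ strict_incl (D S1) G1) /\
    (exists G2 H2, least_closure SR_closed S2 G2 /\
                   least_closure SigmaR_closed S2 H2 /\
                   strict_incl G2 H2).
Proof.
  exists S1, S2. split; [exact part1| exact part2].
Qed.
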